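(* Let $n,k$ be integers with $1<k<n-1$, let $\mathcal{P}_{k,n}=\{x\in[0,1]^n:\sum_{i=1}^nx_i=k\}$, let $\mathcal{F}$ be a strong Bernoulli factory for $\mathcal{P}_{k,n}$, and let $v$ be a vertex of $\mathcal{P}_{k,n}$. Then for every $T\ge0$ the polynomial $P_{v,T}(x)$ is divisible by $\prod_{i:v_i=1}x_i\prod_{i:v_i=0}(1-x_i)$.
   Context: A Bernoulli factory with output set $V$ (for inputs $x\in[0,1]^n$) is a (possibly infinite) rooted binary tree whose internal nodes are labeled by an index $i\in[n]$ or a known constant $c\in(0,1)$ and whose leaves are labeled by elements of $V$; on input $x$ one walks from the root, at a node labeled $i$ flipping a fresh independent coin that is $1$ with probability $x_i$, at a node labeled $c$ a fresh coin of bias $c$, following the edge labeled by the outcome, and outputs the label of the leaf reached; $\mathcal{F}(x)$ is the output and $T_{\mathcal{F}}(x)$ the depth of the leaf reached. For a polytope $\mathcal{P}$ with vertex set $V$, a strong Bernoulli factory for $\mathcal{P}$ is such a factory with output set $V$ that terminates almost surely and satisfies $\mathbb{E}[\mathcal{F}(x)]=x$ for all $x\in\mathcal{P}$. $P_{v,T}(x)=\Pr[\mathcal{F}(x)=v\wedge T_{\mathcal{F}}(x)\le T]$, regarded as the polynomial equal to the sum, over leaves labeled $v$ at depth at most $T$, of the product of the transition probabilities along the root-to-leaf path (each such product has the form $c\prod_ix_i^{a_i}(1-x_i)^{b_i}$ with $c\ge0$). *)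

(* Defs.v *)
From mathcomp Require Import all_boot all_order all_algebra.
From mathcomp Require Import reals.
From mathcomp Require Import mpoly.
Set Implicit Arguments. Unset Strict Implicit. Unset Printing Implicit Defensive.
Import Order.TTheory GRing.Theory Num.Theory.
Local Open Scope ring_scope.

Definition hypersimplex (R : realType) (n k : nat) (x : 'rV[R]_n) : Prop :=
  (forall i : 'I_n, 0 <= x 0 i <= 1) /\ \sum_(i < n) x 0 i = k%:R.

Arguments hypersimplex {R} n k x.

Definition is_vertex (R : realType) (n : nat) (P : 'rV[R]_n -> Prop)
    (v : 'rV[R]_n) : Prop :=
  P v /\ forall (y z : 'rV[R]_n) (t : R), P y -> P z -> 0 < t < 1 ->
    v = t *: y + (1 - t) *: z -> y = z.

(* Node labels of a Bernoulli factory tree: a leaf with an output,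
   a coin of the unknown bias x_i, or a coin of known constant bias c. *)
Inductive node (R : Type) (n : nat) :=
| Leaf of 'rV[R]_n
| Flip of 'I_n
| Const of R.

(* A (possibly infinite) rooted binary tree: the node reached by the finite
   sequence of coin outcomes s (from the root [::]; true = outcome 1). Only
   positions all of whose proper prefixes are internal nodes belong to the tree. *)
Definition factory (R : Type) (n : nat) := seq bool -> node R n.

Definition is_leaf (R : Type) (n : nat) (a : node R n) : bool :=
  if a is Leaf _ then true else false.

Definition reached (R : Type) (n : nat) (F : factory R n) (s : seq bool) : bool :=
  all (fun j => ~~ is_leaf (F (take j s))) (iota 0 (size s)).

Definition edge_poly (R : realType) (n : nat) (a : node R n) (b : bool)
    : {mpoly R[n]} :=
  match a with
  | Flip i => if b then 'X_i else 1 - 'X_i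
  | Const c => if b then c%:MP else (1 - c)%:MP
  | Leaf _ => 0
  end.

Definition path_poly (R : realType) (n : nat) (F : factory R n) (s : seq bool)
    : {mpoly R[n]} :=
  \prod_(j < size s) edge_poly (F (take j s)) (nth false s j).

Definition leafsum (R : realType) (n : nat) (F : factory R n)
    (g : 'rV[R]_n -> R) (T : nat) : {mpoly R[n]} :=
  \sum_(t < T.+1) \sum_(s : t.-tuple bool)
     (if F s is Leaf w then (if reached F s then g w else 0) else 0)
       *: path_poly F s.

Definition P_vT (R : realType) (n : nat) (F : factory R n) (v : 'rV[R]_n)
    (T : nat) : {mpoly R[n]} :=
  leafsum F (fun w => (w == v)%:R) T.

Definition converges_to (R : realType) (u : nat -> R) (l : R) : Prop :=
  forall e : R, 0 < e -> exists N : nat, forall T : nat, (N <= T)%N ->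
    `|u T - l| < e.

(* A strong Bernoulli factory for the polytope P: constants lie in (0,1),
   leaves are labelled by vertices of P, and for every x in P the walk
   terminates almost surely (Pr[T_F(x) <= T] -> 1) and E[F(x)] = x
   (coordinatewise, E[F(x)_i] = lim_T sum over leaves at depth <= T). *)
Definition strong_factory (R : realType) (n : nat) (P : 'rV[R]_n -> Prop)
    (F : factory R n) : Prop :=
  (forall s : seq bool, reached F s ->
     match F s with
     | Const c => 0 < c < 1
     | Leaf w => is_vertex P w
     | Flip _ => True
     end) /\
  forall x : 'rV[R]_n, P x ->
    converges_to (fun T => (leafsum F (fun _ => 1) T).@[fun j => x 0 j]) 1 /\
    forall i : 'I_n,
      converges_to (fun T => (leafsum F (fun w => w 0 i) T).@[fun j => x 0 j])
                   (x 0 i).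

(* Main.v *)
Require Import Defs.
From mathcomp Require Import all_boot all_order all_algebra.
From mathcomp Require Import reals.
From mathcomp Require Import mpoly.
From mathcomp Require Import ring lra.
Import Order.TTheory GRing.Theory Num.Theory.
Set Implicit Arguments. Unset Strict Implicit. Unset Printing Implicit Defensive.
Local Open Scope ring_scope.
Section S.
Variables (R : realType) (n : nat) (F : factory R n).

Lemma reached_int s j : reached F s -> (j < size s)%N -> ~~ is_leaf (F (take j s)).
Proof. by move=> /allP H hj; apply: H; rewrite mem_iota. Qed.

Lemma reached_take s j : reached F s -> reached F (take j s).
Proof.
move=> H; apply/allP => j'; rewrite mem_iota add0n size_take_min => hj'.
rewrite -take_min (minn_idPl _); last first.
  by apply: ltnW; apply: (leq_trans hj'); apply: geq_minl.
apply: reached_int => //; apply: (leq_trans hj'); apply: geq_minr.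
Qed.

Definition tm (g : 'rV[R]_n -> R) (s : seq bool) : R :=
  if F s is Leaf w then (if reached F s then g w else 0) else 0.

Lemma leafsumE g T (xv : 'I_n -> R) : (leafsum F g T).@[xv] =
  \sum_(t < T.+1) \sum_(s : t.-tuple bool) tm g s * (path_poly F s).@[xv].
Proof.
rewrite /leafsum raddf_sum; apply: eq_bigr => t _.
rewrite raddf_sum; apply: eq_bigr => s _.
exact: mevalZ.
Qed.

Lemma conv_ub (u : nat -> R) l : (forall T, u T <= u T.+1) -> converges_to u l ->
  forall T, u T <= l.
Proof.
move=> Hm Hc T; rewrite leNgt; apply/negP => hlt.
have := Hc (u T - l); rewrite subr_gt0 => /(_ hlt) [N HN].
have mono : forall d, u T <= u (T + d)%N.
  elim=> [|d IH]; first by rewrite addn0.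
  by rewrite addnS; apply: le_trans IH (Hm _).
have := HN (maxn N T) (leq_maxl _ _).
have -> : maxn N T = (T + (maxn N T - T))%N by rewrite subnKC // leq_maxr.
move: (mono (maxn N T - T)%N) => h.
move=> h2; have : u (T + (maxn N T - T))%N - l < u T - l.
  by apply: le_lt_trans h2; apply: ler_norm.
by rewrite ltrBlDr subrK ltNge h.
Qed.

Lemma conv_sub (u w : nat -> R) a b : converges_to u a -> converges_to w b ->
  converges_to (fun T => u T - w T) (a - b).
Proof.
move=> Hu Hw e he.
have he2 : 0 < e / 2 by rewrite divr_gt0.
have [N1 H1] := Hu _ he2; have [N2 H2] := Hw _ he2.
exists (maxn N1 N2) => T hT.
have h1 := H1 T (leq_trans (leq_maxl _ _) hT).
have h2 := H2 T (leq_trans (leq_maxr _ _) hT).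
have -> : u T - w T - (a - b) = (u T - a) - (w T - b) by ring.
apply: (le_lt_trans (ler_normB _ _)).
by rewrite [e](splitr e); apply: ltrD.
Qed.

End S.
Section S2.
Variables (R : realType) (n k : nat) (F : factory R n).
Hypothesis Hc : forall s : seq bool, reached F s ->
     match F s with
     | Const c => 0 < c < 1
     | Leaf w => is_vertex (hypersimplex n k) w
     | Flip _ => True
     end.

Definition edge_val (xv : 'I_n -> R) (a : node R n) (b : bool) : R :=
  match a with
  | Flip i => if b then xv i else 1 - xv i
  | Const c => if b then c else 1 - c
  | Leaf _ => 0
  end.

Lemma edge_valE xv a b : (edge_poly a b).@[xv] = edge_val xv a b.
Proof.
case: a => [w|i|c] /=; first exact: meval0.
- by case: b; rewrite ?mevalB ?meval1 mevalXU.
- by case: b; rewrite mevalC.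
Qed.

Lemma pathE xv s : (path_poly F s).@[xv] =
   \prod_(j < size s) edge_val xv (F (take j s)) (nth false s j).
Proof.
have -> : (path_poly F s).@[xv] =
   \prod_(j < size s) (edge_poly (F (take j s)) (nth false s j)).@[xv].
  exact: rmorph_prod.
by apply: eq_bigr => j _; rewrite edge_valE.
Qed.

Lemma path_ge0 xv s : (forall i, 0 <= xv i <= 1) -> reached F s ->
  0 <= (path_poly F s).@[xv].
Proof.
move=> Hx Hs; rewrite pathE; apply: prodr_ge0 => j _.
have := Hc (reached_take j Hs); have := reached_int Hs (ltn_ord j).
case: (F (take j s)) => [w|i|c] //= _.
- by move=> _; have := Hx i; case/andP => h0 h1; case: nth; lra.
- by case/andP => h0 h1; case: nth; lra.
Qed.

Lemma tm_ge0 g s : (forall w, hypersimplex n k w -> 0 <= g w) -> 0 <= tm F g s.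
Proof.
move=> Hg; rewrite /tm; case E: (F s) => [w|i|c] //; case Hr: (reached F s) => //.
by have := Hc Hr; rewrite E => -[Hw _]; apply: Hg.
Qed.

Lemma G_mono g xv T : (forall i, 0 <= xv i <= 1) ->
  (forall w, hypersimplex n k w -> 0 <= g w) ->
  (leafsum F g T).@[xv] <= (leafsum F g T.+1).@[xv].
Proof.
move=> Hx Hg; rewrite !leafsumE [X in _ <= X]big_ord_recr /= lerDl.
apply: sumr_ge0 => s _.
case Hr: (reached F s); last by rewrite /tm Hr; case: (F s) => *; rewrite mul0r.
by apply: mulr_ge0; [apply: tm_ge0 | apply: path_ge0].
Qed.

Lemma term_le g xv (s : seq bool) : (forall i, 0 <= xv i <= 1) ->
  (forall w, hypersimplex n k w -> 0 <= g w) ->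
  tm F g s * (path_poly F s).@[xv] <= (leafsum F g (size s)).@[xv].
Proof.
move=> Hx Hg.
have Hnn : forall (t : nat) (s' : t.-tuple bool), 0 <= tm F g s' * (path_poly F s').@[xv].
  move=> t s'; case Hr: (reached F s'); last by rewrite /tm Hr; case: (F s') => *; rewrite mul0r.
  by apply: mulr_ge0; [apply: tm_ge0 | apply: path_ge0].
rewrite leafsumE (bigD1 ord_max) //= (bigD1 (in_tuple s)) //= -addrA lerDl.
apply: addr_ge0; apply: sumr_ge0 => *; [exact: Hnn|].
by apply: sumr_ge0 => *.
Qed.
End S2.
Lemma leafsumB (R : realType) (n : nat) (F : factory R n) g1 g2 T :
  leafsum F (fun w => g1 w - g2 w) T = leafsum F g1 T - leafsum F g2 T.
Proof.
rewrite /leafsum -sumrB; apply: eq_bigr => t _; rewrite -sumrB; apply: eq_bigr => s _.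
rewrite -scalerBl; congr (_ *: _); case: (F s) => // w; case: (reached F s) => //; by rewrite subr0.
Qed.

Section S3.
Variables (R : realType) (n k : nat) (F : factory R n) (v : 'rV[R]_n).
Hypotheses (hk1 : (1 < k)%N) (hkn : (k < n.-1)%N)
  (HF : strong_factory (hypersimplex n k) F).

Definition isflip (a : node R n) (i : 'I_n) : bool := if a is Flip i' then i' == i else false.
Definition good (s : seq bool) (i : 'I_n) (j : nat) : bool :=
  isflip (F (take j s)) i && (nth false s j == (v 0 i == 1)).

Lemma key s i : reached F s -> F s = Leaf v -> (v 0 i == 1) || (v 0 i == 0) ->
  exists j : 'I_(size s), good s i j.
Proof.
move=> Hr Hs Hi.
case: (boolP [exists j : 'I_(size s), good s i j]) => [/existsP //|/existsPn Hno].
exfalso.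
have [Hc Hconv] := HF.
set m := n.-1.
have n0 : (0 < n)%N by move: hkn; rewrite /m; case: n.
have hnm : n = m.+1 by rewrite /m prednK.
set a : R := if v 0 i == 1 then 0 else 1.
have ha : 0 <= a <= 1 by rewrite /a; case: ifP => _; rewrite ?lexx ?ler01.
have hkR : 1 < k%:R :> R by rewrite ltr1n.
have hkm : k%:R < m%:R :> R by rewrite ltr_nat.
have hm0 : 0 < m%:R :> R by lra.
set c : R := (k%:R - a) / m%:R.
have hcm : c * m%:R = k%:R - a by rewrite /c divfK // gt_eqF.
have hc : 0 < c < 1.
  apply/andP; split; first by rewrite /c divr_gt0 //; lra.
  by rewrite /c ltr_pdivrMr // mul1r; lra.
pose x : 'rV[R]_n := \row_(j < n) (if j == i then a else c).
have Hx : forall j, 0 <= x 0 j <= 1.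
  by move=> j; rewrite mxE; case: (j == i) => //; apply/andP; split; lra.
have Px : hypersimplex n k x.
  split => //.
  rewrite (eq_bigr (fun j => c + (if j == i then a - c else 0))); last first.
    by move=> j _; rewrite mxE; case: (j == i); ring.
  rewrite big_split /= sumr_const card_ord -big_mkcond big_pred1_eq /=.
  rewrite hnm mulrS -[c *+ m]mulr_natr hcm; ring.
pose xv := fun j => x 0 j.
have [g [Hg [Hgc Hgv]]] : exists g : 'rV[R]_n -> R,
   (forall w, hypersimplex n k w -> 0 <= g w) /\
   converges_to (fun T => (leafsum F g T).@[xv]) 0 /\ g v = 1.
  have [Hc1 Hci] := Hconv x Px.
  case hv1: (v 0 i == 1).
    exists (fun w => w 0 i); split; first by move=> w [Hw _]; case/andP: (Hw i).
    split; last exact/eqP.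
    by have := Hci i; rewrite /xv mxE eqxx /a hv1.
  have hv0 : v 0 i = 0 by move: Hi; rewrite hv1 /= => /eqP.
  exists (fun w => 1 - w 0 i); split; first by move=> w [Hw _]; case/andP: (Hw i); lra.
  split; last by rewrite hv0 subr0.
  have := conv_sub Hc1 (Hci i); rewrite mxE eqxx /a hv1 subrr.
  by move=> H e he; have [N HN] := H e he; exists N => T hT; rewrite leafsumB mevalB; apply: HN.
have Hxv : forall j, 0 <= xv j <= 1 by [].
have Hle := term_le Hc s Hxv Hg.
have Hub := conv_ub (fun T => G_mono Hc T Hxv Hg) Hgc (size s).
have Htm : tm F g s = 1 by rewrite /tm Hs Hr.
have Hpos : 0 < (path_poly F s).@[xv].
  rewrite pathE; apply: prodr_gt0 => j _.
  have := Hc _ (reached_take j Hr); have := reached_int Hr (ltn_ord j).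
  have := Hno j; rewrite /good.
  case: (F (take j s)) => [w|i'|c'] //= Hng _.
  - move=> _; rewrite /xv /x mxE.
    case: (eqVneq i' i) Hng => [_|hne] /= Hng.
      move: Hng; rewrite /a; case: (v 0 i == 1); case: nth => //= _; lra.
    by case: nth; lra.
  - by case/andP => h0 h1; case: nth; lra.
move: Hle; rewrite Htm mul1r => Hle.
by have := lt_le_trans Hpos (le_trans Hle Hub); rewrite ltxx.
Qed.

End S3.
Section S4.
Variables (R : realType) (n k : nat) (F : factory R n) (v : 'rV[R]_n).
Hypotheses (hk1 : (1 < k)%N) (hkn : (k < n.-1)%N)
  (HF : strong_factory (hypersimplex n k) F).

Definition Ii (i : 'I_n) : bool := (v 0 i == 1) || (v 0 i == 0).
Definition dd (i : 'I_n) : {mpoly R[n]} := if v 0 i == 1 then 'X_i else 1 - 'X_i.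

Lemma D_eq : \prod_(i < n | Ii i) dd i =
  (\prod_(i < n | v 0 i == 1) 'X_i) * (\prod_(i < n | v 0 i == 0) (1 - 'X_i)).
Proof.
rewrite (bigID (fun i => v 0 i == 1)) /=; congr (_ * _).
  apply: eq_big => i; first by rewrite /Ii; case: (v 0 i == 1); rewrite ?andbT ?andbF.
  by move=> /andP[_ h]; rewrite /dd h.
apply: eq_big => i.
  rewrite /Ii; case h1: (v 0 i == 1) => //=; rewrite ?andbT ?andbF //.
  move/eqP: h1 => ->.
  by rewrite oner_eq0.
by move=> /andP[_ /negbTE h]; rewrite /dd h.
Qed.

Lemma factor s : reached F s -> F s = Leaf v ->
  exists q, path_poly F s = q * \prod_(i < n | Ii i) dd i.
Proof.
move=> Hr Hs.
case: (boolP [exists i, Ii i]) => [/existsP [i0 Hi0]| /existsPn Hn]; last first.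
  exists (path_poly F s); rewrite big_pred0 ?mulr1 //; by move=> i; apply/negbTE/Hn.
have [j0 _] := key hk1 hkn HF Hr Hs Hi0.
pose f i := odflt j0 [pick j : 'I_(size s) | good F v s i j].
have Hf : forall i, Ii i -> good F v s i (f i).
  move=> i Hi; rewrite /f; case: pickP => [j //|H].
  by have [j Hj] := key hk1 hkn HF Hr Hs Hi; rewrite H in Hj.
pose A := [set i | Ii i].
have finj : {in A &, injective f}.
  move=> i1 i2; rewrite !inE => H1 H2 he.
  have g1 := Hf i1 H1; have g2 := Hf i2 H2; rewrite he in g1.
  move: g1 g2; rewrite /good; case: (F (take (f i2) s)) => //= i'.
  by move=> /andP[/eqP e1 _] /andP[/eqP e2 _]; rewrite -e1 -e2.
pose J := f @: A.
exists (\prod_(j < size s | j \notin J) edge_poly (F (take j s)) (nth false s j)).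
rewrite /path_poly (bigID (fun j => j \in J)) /= mulrC; congr (_ * _).
rewrite big_imset //=; apply: eq_big => i; first by rewrite inE.
rewrite inE => Hi; have := Hf i Hi; rewrite /good /dd.
case: (F (take (f i) s)) => //= i' /andP[/eqP -> /eqP ->]; by case: (v 0 i == 1).
Qed.

End S4.

Theorem lemma7p4 (R : realType) (n k : nat) (F : factory R n) (v : 'rV[R]_n) :
  (1 < k)%N -> (k < n.-1)%N ->
  strong_factory (hypersimplex n k) F ->
  is_vertex (hypersimplex n k) v ->
  forall T : nat, exists q : {mpoly R[n]},
    P_vT F v T =
      q * ((\prod_(i < n | v 0 i == 1) 'X_i) *
           (\prod_(i < n | v 0 i == 0) (1 - 'X_i))).
Proof.
move=> hk1 hkn HF _ T.
rewrite -D_eq /P_vT /leafsum.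
set D := \prod_(i < n | Ii v i) dd v i.
apply: (big_ind (fun p => exists q, p = q * D)).
- by exists 0; rewrite mul0r.
- by move=> p1 p2 [q1 ->] [q2 ->]; exists (q1 + q2); rewrite mulrDl.
move=> t _.
apply: (big_ind (fun p => exists q, p = q * D)).
- by exists 0; rewrite mul0r.
- by move=> p1 p2 [q1 ->] [q2 ->]; exists (q1 + q2); rewrite mulrDl.
move=> s _.
case E: (F s) => [w|i|c]; try by exists 0; rewrite scale0r mul0r.
case Hr: (reached F s); last by exists 0; rewrite scale0r mul0r.
case: (eqVneq w v) E => [-> E|ne E]; last by exists 0; rewrite scale0r mul0r.
rewrite /= scale1r.
by have := factor hk1 hkn HF Hr E.
Qed.
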